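(* Let $A$ be a differential $K$-algebra without exponents nor logarithm and let $M$ be a differential module over $A$ that is finite free as an $A$-module. Then $M$ is regular singular if and only if $M$ has an $A$-basis in which the matrix of the connection has all its entries in $K$. Moreover, the scalar extension functor $N\mapsto N\otimes_{K[t,t^{-1}]}A$ (with connection $\nabla\otimes1+1\otimes\partial$) is an equivalence of categories $\mathrm{Reg}(K[t,t^{-1}])\xrightarrow{\sim}\mathrm{Reg}(A)$, where $K[t,t^{-1}]$ carries the derivation $t\frac{d}{dt}$.
   Context: $K$ is an algebraically closed field of characteristic $0$. $K[t^K]$ is the group algebra over $K$ of $(K,+)$, with $K$-basis $t^a$ ($a\in K$), $t^at^b=t^{a+b}$; $K[t,t^{-1}]$ is identified with the span of $t^n$, $n\in\mathbb{Z}$. Fix a set $\widetilde{K/\mathbb{Z}}\subset K$ of representatives of $K/\mathbb{Z}$ with $0\in\widetilde{K/\mathbb{Z}}$. $A$ is a commutative ring with unit containing $K[t,t^{-1}]$ as a subring, with a derivation $\partial$ extending $t\frac{d}{dt}$. $A[t^K]:=A\otimes_{K[t,t^{-1}]}K[t^K]$, $E_A:=A[t^K][\ell]$ ($\ell$ an indeterminate), with derivation $\partial$ extending that of $A$, $\partial(t^a)=at^a$, $\partial(\ell)=1$. $A$ is a differential $K$-algebra without exponents nor logarithm if $\{f\in A:\partial^2 f=0\}=K$ and, for every $a\in\widetilde{K/\mathbb{Z}}\setminus\{0\}$, $\partial f+af=0$ ($f\in A$) implies $f=0$. A differential module over a differential ring $(B,\partial)$ is a $B$-module $M$ with additive $\nabla$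 satisfying $\nabla(fm)=\partial(f)m+f\nabla(m)$; it is trivial if isomorphic to a direct sum of copies of $(B,\partial)$. If $M$ is free with basis $b_1,\dots,b_n$ and $\nabla(b_i)=\sum_j g_{j,i}b_j$, the matrix of the connection in this basis is $G=(g_{i,j})$. $M$ is regular singular if $M$ is finite free over $A$ and $M\otimes_AE_A$ (connection $\nabla\otimes1+1\otimes\partial$) is trivial as a differential module over $E_A$; $\mathrm{Reg}(A)$ is the full subcategory of differential modules over $A$ formed by regular singular ones (with the same definition for $A=K[t,t^{-1}]$). *)

(* Defs.v *)
From HB Require Import structures.
From mathcomp Require Import all_boot all_order all_algebra.
Set Implicit Arguments. Unset Strict Implicit. Unset Printing Implicit Defensive.
Import Order.TTheory GRing.Theory Num.Theory.
Local Open Scope ring_scope.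

Definition derivation (R : pzRingType) (d : R -> R) : Prop :=
  (forall x y, d (x + y) = d x + d y) /\ (forall x y, d (x * y) = d x * y + x * d y).

Definition tpow (R : pzRingType) (t tinv : R) (n : int) : R :=
  match n with Posz k => t ^+ k | Negz k => tinv ^+ k.+1 end.

(** (L, t, tinv) is (a model of) the Laurent polynomial ring K[t,t^{-1}]:
    t is invertible with inverse tinv and the t^n (n in Z) form a K-basis. *)
Definition laurent_ring (K : fieldType) (L : comAlgType K) (t tinv : L) : Prop :=
  t * tinv = 1 /\
  (forall (s : seq int) (c : int -> K), uniq s ->
     \sum_(n <- s) c n *: tpow t tinv n = 0 -> forall n, n \in s -> c n = 0) /\
  (forall x : L, exists (s : seq int) (c : int -> K), x = \sum_(n <- s) c n *: tpow t tinv n).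

(** d is the derivation t d/dt on L (K-linear derivation with d t = t). *)
Definition is_t_ddt (K : fieldType) (L : comAlgType K) (t : L) (d : L -> L) : Prop :=
  derivation d /\ (forall (k : K) x, d (k *: x) = k *: d x) /\ d t = t.

Definition reps_KmodZ (K : fieldType) (Rep : pred K) : Prop :=
  Rep 0 /\
  (forall x : K, exists (r : K) (n : int), Rep r /\ x = r + n%:~R) /\
  (forall (r1 r2 : K) (n : int), Rep r1 -> Rep r2 -> r1 = r2 + n%:~R -> r1 = r2).

(** (E, j, tp, l, dE) is (a model of) the differential ring
    E_R = (R (x)_{K[t,t^-1]} K[t^K])[l] over the differential K-algebra (R, dR),
    where tR is the image of t in R: E is a commutative R-algebra (via j),
    tp a = t^a, with t^{a+b} = t^a t^b, t^0 = 1, t^1 = t, and the family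
    t^a l^k (a in Rep, k in N) is an R-basis of E; dE extends dR,
    dE(t^a) = a t^a, dE(l) = 1.  These properties determine E_R up to
    unique isomorphism. *)
Definition E_model (K : fieldType) (Rep : pred K) (R : comAlgType K) (tR : R)
    (dR : R -> R) (E : comNzRingType) (j : {rmorphism R -> E}) (tp : K -> E)
    (l : E) (dE : E -> E) : Prop :=
  [/\ tp 0 = 1, (forall a b, tp (a + b) = tp a * tp b) & tp 1 = j tR] /\
  (forall (s : seq K) (N : nat) (f : K -> nat -> R), uniq s -> all Rep s ->
     \sum_(a <- s) \sum_(k < N) j (f a k) * tp a * l ^+ k = 0 ->
     forall a k, a \in s -> (k < N)%N -> f a k = 0) /\
  (forall e : E, exists (s : seq K) (N : nat) (f : K -> nat -> R),
     [/\ uniq s, all Rep s & e = \sum_(a <- s) \sum_(k < N) j (f a k) * tp a * l ^+ k]) /\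
  [/\ derivation dE, (forall r, dE (j r) = j (dR r)),
      (forall a, dE (tp a) = j (a%:A) * tp a) & dE l = 1].

Definition is_diffmod (R : comNzRingType) (dR : R -> R) (M : lmodType R)
    (nabla : M -> M) : Prop :=
  (forall x y, nabla (x + y) = nabla x + nabla y) /\
  (forall (a : R) m, nabla (a *: m) = dR a *: m + a *: nabla m).

Definition is_basis (R : comNzRingType) (M : lmodType R) (n : nat) (b : 'I_n -> M) : Prop :=
  (forall c : 'I_n -> R, \sum_i c i *: b i = 0 -> forall i, c i = 0) /\
  (forall m : M, exists c : 'I_n -> R, m = \sum_i c i *: b i).

Definition finite_free (R : comNzRingType) (M : lmodType R) : Prop :=
  exists n (b : 'I_n -> M), is_basis b.

Definition conn_matrix (R : comNzRingType) (M : lmodType R) (nabla : M -> M)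
    (n : nat) (b : 'I_n -> M) (G : 'M[R]_n) : Prop :=
  forall i, nabla (b i) = \sum_j G j i *: b j.

(** The free differential module (E^n, dE + G) is trivial: isomorphic to a
    (finite) direct sum of copies of (E, dE), i.e. there is an E-linear
    isomorphism P : E^m -> E^n (inverse Q) sending the standard basis to
    horizontal vectors. *)
Definition trivial_free (E : comNzRingType) (dE : E -> E) (n : nat) (G : 'M[E]_n) : Prop :=
  exists m (P : 'M[E]_(n, m)) (Q : 'M[E]_(m, n)),
    [/\ P *m Q = 1%:M, Q *m P = 1%:M & map_mx dE P + G *m P = 0].

(** Regular singularity of the free differential module (R^n, dR + G):
    its scalar extension to E_R, which is (E^n, dE + j(G)), is trivial. *)
Definition regsing_mx (R : comNzRingType) (E : comNzRingType) (j : R -> E)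
    (dE : E -> E) (n : nat) (G : 'M[R]_n) : Prop :=
  trivial_free dE (map_mx j G).

Definition regular_singular (R : comNzRingType) (E : comNzRingType) (j : R -> E)
    (dE : E -> E) (M : lmodType R) (nabla : M -> M) : Prop :=
  exists n (b : 'I_n -> M) (G : 'M[R]_n),
    [/\ is_basis b, conn_matrix nabla b G & regsing_mx j dE G].

(** Morphisms of free differential modules (R^n1, dR + G1) -> (R^n2, dR + G2):
    matrices F with dR(F) + G2 F = F G1. *)
Definition horizontal (R : comNzRingType) (dR : R -> R) (n1 n2 : nat)
    (G1 : 'M[R]_n1) (G2 : 'M[R]_n2) (F : 'M[R]_(n2, n1)) : Prop :=
  map_mx dR F + G2 *m F = F *m G1.

(* Main.v *)
Require Import Defs.
From HB Require Import structures.
From mathcomp Require Import all_boot all_order all_algebra.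
From Stdlib Require Import ClassicalEpsilon.
From mathcomp Require Import ring.
Import GRing.Theory.
Local Open Scope ring_scope.
Set Implicit Arguments. Unset Strict Implicit. Unset Printing Implicit Defensive.

Section Deriv.
Variable (R : comPzRingType) (d : R -> R) (hd : derivation d).

Lemma der_add x y : d (x + y) = d x + d y. Proof. exact: hd.1. Qed.
Lemma der_mul x y : d (x * y) = d x * y + x * d y. Proof. exact: hd.2. Qed.
Lemma der0 : d 0 = 0.
Proof. have h := der_add 0 0; rewrite addr0 in h. by apply: (addrI (d 0)); rewrite addr0 -h. Qed.
Lemma derN x : d (- x) = - d x.
Proof. by apply/eqP; rewrite -subr_eq0 opprK -der_add addNr der0. Qed.
Lemma derB x y : d (x - y) = d x - d y. Proof. by rewrite der_add derN. Qed.
Lemma der1 : d 1 = 0.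
Proof. have h := der_mul 1 1; rewrite !mul1r mulr1 in h. by apply: (addrI (d 1)); rewrite addr0 -h. Qed.
Lemma der_sum I (r : seq I) (P : pred I) (F : I -> R) :
  d (\sum_(i <- r | P i) F i) = \sum_(i <- r | P i) d (F i).
Proof.
elim: r => [|x r IH]; first by rewrite !big_nil der0.
by rewrite !big_cons; case: (P x); rewrite ?der_add IH.
Qed.
Lemma der_natmul x n : d (x *+ n) = d x *+ n.
Proof. by elim: n => [|n IH]; rewrite ?mulr0n ?der0 // !mulrS der_add IH. Qed.
Lemma der_nat n : d n%:R = 0.
Proof. by rewrite der_natmul der1 mul0rn. Qed.
Lemma der_exp x k : d (x ^+ k.+1) = k.+1%:R * x ^+ k * d x.
Proof.
elim: k => [|k IH]; first by rewrite expr1 expr0 mulr1 mul1r.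
rewrite exprS der_mul IH exprS -natr1.
rewrite mulrDl mul1r.
rewrite -[k.+2]addn1 natrD -natr1; ring.
Qed.
End Deriv.

Section Coef.
Variables (K : fieldType) (Rep : pred K) (R : comAlgType K) (tR : R) (dR : R -> R)
  (E : comNzRingType) (j : {rmorphism R -> E}) (tp : K -> E) (l : E) (dE : E -> E)
  (hE : E_model Rep tR dR j tp l dE).

Definition ex (s : seq K) (N : nat) (F : K -> nat -> R) : E :=
  \sum_(a <- s) \sum_(k < N) j (F a k) * tp a * l ^+ k.
Definition supp (s : seq K) (N : nat) (F : K -> nat -> R) :=
  forall a k, F a k != 0 -> (a \in s) && (k < N)%N.

Lemma ex_widen s s' N N' F : uniq s -> uniq s' -> {subset s <= s'} -> (N <= N')%N ->
  supp s N F -> ex s N F = ex s' N' F.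
Proof.
move=> us us' ss' NN' sF; rewrite /ex.
have F0 a k : ~~ ((a \in s) && (k < N)%N) -> F a k = 0.
  by move=> h; apply/eqP; apply: contraNT h; apply: sF.
have inner a : \sum_(k < N') j (F a k) * tp a * l ^+ k =
    if a \in s then \sum_(k < N) j (F a k) * tp a * l ^+ k else 0.
  case: ifP => ha.
    rewrite (big_ord_widen N' (fun k => j (F a k) * tp a * l ^+ k) NN') [RHS]big_mkcond.
    apply: eq_bigr => k _; case: ifP => // hk.
    by rewrite F0 ?ha ?hk // rmorph0 !mul0r.
  by apply: big1 => k _; rewrite F0 ?ha // rmorph0 !mul0r.
rewrite (eq_bigr _ (fun a _ => inner a)) -big_mkcond -big_filter.
apply: perm_big; apply: uniq_perm => //; first exact: filter_uniq.
by move=> a; rewrite mem_filter; case: (boolP (a \in s)) => // /ss' ->.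
Qed.

Lemma ex_indep s N F : uniq s -> all Rep s -> supp s N F -> ex s N F = 0 ->
  forall a k, F a k = 0.
Proof.
move=> us rs sF h0 a k; case: (boolP ((a \in s) && (k < N)%N)) => [/andP[ha hk]|h].
  by have [_ [hi _]] := hE; apply: (hi s N F us rs h0).
by apply/eqP; apply: contraNT h; apply: sF.
Qed.

Lemma span_ex e : exists x : seq K * nat * (K -> nat -> R),
  [/\ uniq x.1.1, all Rep x.1.1 & e = ex x.1.1 x.1.2 x.2].
Proof.
have [_ [_ [hs _]]] := hE; have [s [N [f [us rs ->]]]] := hs e.
by exists (s, N, f).
Qed.

Definition rp e := proj1_sig (constructive_indefinite_description _ (span_ex e)).
Definition sp e := (rp e).1.1.
Definition Np e := (rp e).1.2.
Definition coef e a k := if (a \in sp e) && (k < Np e)%N then (rp e).2 a k else 0.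

Lemma rpP e : [/\ uniq (sp e), all Rep (sp e) & e = ex (sp e) (Np e) (rp e).2].
Proof. exact: (proj2_sig (constructive_indefinite_description _ (span_ex e))). Qed.

Lemma sp_uniq e : uniq (sp e). Proof. by case: (rpP e). Qed.
Lemma sp_Rep e : all Rep (sp e). Proof. by case: (rpP e). Qed.

Lemma supp_coef e : supp (sp e) (Np e) (coef e).
Proof. by move=> a k; rewrite /coef; case: ifP => //; rewrite eqxx. Qed.

Lemma coefE e : e = ex (sp e) (Np e) (coef e).
Proof.
case: (rpP e) => _ _ {1}->; rewrite /ex /coef.
rewrite big_seq_cond [RHS]big_seq_cond; apply: eq_bigr => a /andP[ha _].
by apply: eq_bigr => k _; rewrite ha ltn_ord.
Qed.

Lemma exB s N F G : ex s N (fun a k => F a k - G a k) = ex s N F - ex s N G.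
Proof.
rewrite /ex -sumrB; apply: eq_bigr => a _; rewrite -sumrB; apply: eq_bigr => k _.
by rewrite rmorphB !mulrBl.
Qed.

Lemma exD s N F G : ex s N (fun a k => F a k + G a k) = ex s N F + ex s N G.
Proof.
rewrite /ex -big_split; apply: eq_bigr => a _; rewrite -big_split; apply: eq_bigr => k _.
by rewrite rmorphD !mulrDl.
Qed.

Lemma coef_ex s N F : uniq s -> all Rep s -> supp s N F ->
  forall a k, coef (ex s N F) a k = F a k.
Proof.
move=> us rs sF; set e := ex s N F.
set s' := undup (sp e ++ s); set N' := maxn (Np e) N.
have us' : uniq s' by apply: undup_uniq.
have rs' : all Rep s'.
  by apply/allP => a; rewrite mem_undup mem_cat => /orP[] h;
    [apply: (allP (@sp_Rep e)) | apply: (allP rs)].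
have h1 : e = ex s' N' (coef e).
  rewrite {1}(coefE e); apply: ex_widen => //; first exact: sp_uniq.
    by move=> a ha; rewrite mem_undup mem_cat ha.
  by rewrite leq_maxl.
  exact: supp_coef.
have h2 : e = ex s' N' F.
  apply: ex_widen => //; first by move=> a ha; rewrite mem_undup mem_cat ha orbT.
  by rewrite leq_maxr.
have h0 : ex s' N' (fun a k => coef e a k - F a k) = 0 by rewrite exB -h1 -h2 subrr.
have sD : supp s' N' (fun a k => coef e a k - F a k).
  move=> a k hne; case: (boolP (coef e a k == 0)) => hc.
    have : F a k != 0 by apply: contraNneq hne => ->; rewrite (eqP hc) subr0.
    move/sF/andP => [ha hk]; rewrite mem_undup mem_cat ha orbT /=.
    by apply: leq_trans hk _; rewrite leq_maxr.
  move: (supp_coef hc) => /andP[ha hk]; rewrite mem_undup mem_cat ha /=.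
  by apply: leq_trans hk _; rewrite leq_maxl.
move=> a k; apply/eqP; rewrite -subr_eq0; apply/eqP.
exact: (ex_indep us' rs' sD h0).
Qed.

Lemma coef_eq0 e : (forall a k, coef e a k = 0) -> e = 0.
Proof.
move=> h; rewrite (coefE e) /ex; apply: big1 => a _; apply: big1 => k _.
by rewrite h rmorph0 !mul0r.
Qed.

Lemma coef_inj e1 e2 : (forall a k, coef e1 a k = coef e2 a k) -> e1 = e2.
Proof.
move=> h; rewrite (coefE e1) (coefE e2).
set s' := undup (sp e1 ++ sp e2); set N' := maxn (Np e1) (Np e2).
have us' : uniq s' by apply: undup_uniq.
rewrite (@ex_widen _ s' _ N') ?sp_uniq //; last exact: supp_coef.
- rewrite [RHS](@ex_widen _ s' _ N') ?sp_uniq //; last exact: supp_coef.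
  + by rewrite /ex; apply: eq_bigr => a _; apply: eq_bigr => k _; rewrite h.
  + by move=> a ha; rewrite mem_undup mem_cat ha orbT.
  + by rewrite leq_maxr.
- by move=> a ha; rewrite mem_undup mem_cat ha.
- by rewrite leq_maxl.
Qed.

Lemma common_supp (es : seq E) : exists s N, [/\ uniq s, all Rep s &
  forall e, e \in es -> supp s N (coef e)].
Proof.
exists (undup (flatten [seq sp e | e <- es])), (\max_(e <- es) Np e); split.
- exact: undup_uniq.
- apply/allP => a; rewrite mem_undup => /flatten_mapP[e _ ha].
  exact: (allP (@sp_Rep e)).
- move=> e he a k hne; move: (supp_coef hne) => /andP[ha hk].
  rewrite mem_undup; apply/andP; split; first by apply/flatten_mapP; exists e.
  by apply: leq_trans hk _; apply: leq_bigmax_seq.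
Qed.

Lemma ex_coef_any e s N : uniq s -> supp s N (coef e) -> e = ex s N (coef e).
Proof.
move=> us sN; rewrite {1}(coefE e) /ex.
set s' := undup (sp e ++ s); set N' := maxn (Np e) N.
have h1 := @ex_widen (sp e) s' (Np e) N' (coef e) (@sp_uniq e) (undup_uniq _)
  (fun a ha => etrans (mem_undup _ _) (etrans (mem_cat _ _ _) (introT orP (or_introl ha))))
  (leq_maxl _ _) (@supp_coef e).
have h2 := @ex_widen s s' N N' (coef e) us (undup_uniq _)
  (fun a ha => etrans (mem_undup _ _) (etrans (mem_cat _ _ _) (introT orP (or_intror ha))))
  (leq_maxr _ _) sN.
by rewrite /ex in h1 h2; rewrite h1 h2.
Qed.

Lemma coef0 a k : coef 0 a k = 0.
Proof.
have -> : (0 : E) = ex [::] 0 (fun _ _ => 0) by rewrite /ex big_nil.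
by rewrite coef_ex // => ? ?; rewrite eqxx.
Qed.

Lemma coefD e1 e2 a k : coef (e1 + e2) a k = coef e1 a k + coef e2 a k.
Proof.
have [s [N [us rs hs]]] := common_supp [:: e1; e2].
have s1 := hs e1 (mem_head _ _); have s2 : supp s N (coef e2) by apply: hs; rewrite !inE eqxx orbT.
rewrite (ex_coef_any us s1) (ex_coef_any us s2) -exD coef_ex //.
- by rewrite -(ex_coef_any us s1) -(ex_coef_any us s2).
move=> b m hne; case: (boolP (coef e1 b m == 0)) => hc; last exact: s1.
by apply: s2; apply: contraNneq hne => ->; rewrite (eqP hc) addr0.
Qed.

Lemma coef_jmul r e a k : coef (j r * e) a k = r * coef e a k.
Proof.
have sN : supp (sp e) (Np e) (fun b m => r * coef e b m).
  move=> b m hne; apply: supp_coef; apply: contraNneq hne => ->; by rewrite mulr0.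
have -> : j r * e = ex (sp e) (Np e) (fun b m => r * coef e b m).
  rewrite {1}(coefE e) /ex mulr_sumr; apply: eq_bigr => b _; rewrite mulr_sumr.
  by apply: eq_bigr => m _; rewrite rmorphM !mulrA.
by rewrite coef_ex ?sp_uniq ?sp_Rep.
Qed.

Lemma coef_mulj r e a k : coef (e * j r) a k = coef e a k * r.
Proof. by rewrite mulrC coef_jmul mulrC. Qed.

Lemma coefN e a k : coef (- e) a k = - coef e a k.
Proof. by apply/eqP; rewrite -subr_eq0 opprK -coefD addNr coef0. Qed.

Lemma coefB e1 e2 a k : coef (e1 - e2) a k = coef e1 a k - coef e2 a k.
Proof. by rewrite coefD coefN. Qed.

Lemma coef_sum I (r : seq I) (P : pred I) (F : I -> E) a k :
  coef (\sum_(i <- r | P i) F i) a k = \sum_(i <- r | P i) coef (F i) a k.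
Proof.
elim: r => [|x r IH]; first by rewrite !big_nil coef0.
by rewrite !big_cons; case: (P x); rewrite ?coefD IH.
Qed.

Lemma coef_mono r b m a k : Rep b ->
  coef (j r * tp b * l ^+ m) a k = if (a == b) && (k == m) then r else 0.
Proof.
move=> hb.
have -> : j r * tp b * l ^+ m = ex [:: b] m.+1 (fun a k => if (a == b) && (k == m) then r else 0).
  rewrite /ex big_cons big_nil addr0 (bigD1 ord_max) //= !eqxx /= big1 ?addr0 //.
  move=> i hi; have -> : (i == m :> nat) = false.
    by apply/negbTE; apply: contra hi => /eqP h; apply/eqP/val_inj.
  by rewrite rmorph0 !mul0r.
rewrite coef_ex //=; first by rewrite hb.
move=> a' k'; case: ifP; last by rewrite eqxx.
by case/andP => /eqP -> /eqP -> _; rewrite mem_head ltnSn.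
Qed.

Lemma coef_one a k : tp 0 = 1 -> Rep 0 -> coef 1 a k = if (a == 0) && (k == 0%N) then 1 else 0.
Proof.
move=> h0 r0; rewrite -(@coef_mono 1 0 0 a k r0); congr coef.
by rewrite rmorph1 mul1r expr0 mulr1 h0.
Qed.

End Coef.

Section Const.
Variables (K : fieldType) (charK0 : [pchar K] =i pred0) (Rep : pred K) (hRep : reps_KmodZ Rep)
  (R : comAlgType K) (tR : R) (dR : R -> R) (hdR : derivation dR)
  (hdRK : forall c : K, dR c%:A = 0)
  (no_log : forall f : R, dR (dR f) = 0 <-> exists c : K, f = c%:A)
  (no_exp : forall (a : K) (f : R), Rep a -> a != 0 -> dR f + a *: f = 0 -> f = 0)
  (E : comNzRingType) (j : {rmorphism R -> E}) (tp : K -> E) (l : E) (dE : E -> E)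
  (hE : E_model Rep tR dR j tp l dE).

Local Notation coef := (coef hE).
Local Notation ex := (ex j tp l).

Lemma hdE : derivation dE. Proof. by case: hE => _ [_ [_ []]]. Qed.
Lemma dEj r : dE (j r) = j (dR r). Proof. by case: hE => _ [_ [_ []]]. Qed.
Lemma dEtp a : dE (tp a) = j (a%:A) * tp a. Proof. by case: hE => _ [_ [_ []]]. Qed.
Lemma dEl : dE l = 1. Proof. by case: hE => _ [_ [_ []]]. Qed.
Lemma tp0 : tp 0 = 1. Proof. by case: hE => [[]]. Qed.
Lemma tpD a b : tp (a + b) = tp a * tp b. Proof. by case: hE => [[]]. Qed.
Lemma tp1 : tp 1 = j tR. Proof. by case: hE => [[]]. Qed.
Lemma Rep0 : Rep 0. Proof. by case: hRep. Qed.

Lemma dR_scal (c : K) f : dR (c%:A * f) = c%:A * dR f.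
Proof. by rewrite (der_mul hdR) hdRK mul0r add0r. Qed.

Lemma dR_nat (n : nat) f : dR (n%:R * f) = n%:R * dR f.
Proof. by rewrite (der_mul hdR) (der_nat hdR) mul0r add0r. Qed.

Lemma dE_mono f a k : dE (j f * tp a * l ^+ k) =
  j (dR f + a%:A * f) * tp a * l ^+ k + j (k%:R * f) * tp a * l ^+ k.-1.
Proof.
rewrite !(der_mul hdE) dEj dEtp.
case: k => [|k].
  by rewrite expr0 (der1 hdE) mulr0 addr0 mul0r rmorph0 !mul0r addr0 rmorphD rmorphM; ring.
rewrite (der_exp hdE) dEl mulr1 /= !rmorphD !rmorphM rmorph_nat; ring.
Qed.

Definition Fd (F : K -> nat -> R) a k := dR (F a k) + a%:A * F a k + k.+1%:R * F a k.+1.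

Lemma dE_ex s N F : supp s N F -> dE (ex s N F) = ex s N (Fd F).
Proof.
move=> sF; rewrite /ex (der_sum hdE); apply: eq_bigr => a _.
rewrite (der_sum hdE); under eq_bigr => k _ do rewrite dE_mono.
rewrite big_split /=.
rewrite /Fd; under [RHS]eq_bigr => k _ do rewrite rmorphD mulrDl mulrDl.
rewrite big_split /=; congr (_ + _).
have FN k : (N <= k)%N -> F a k = 0.
  move=> hk; apply/eqP; apply: contraLR hk => /sF /andP[_]; by rewrite -ltnNge.
case: N sF FN => [|N] sF FN; first by rewrite !big_ord0.
rewrite big_ord_recl /= mul0r rmorph0 !mul0r add0r big_ord_recr /= FN // mulr0 rmorph0 !mul0r addr0.
by apply: eq_bigr => i _.
Qed.

Lemma coef_dE e a k : coef (dE e) a k = Fd (coef e) a k.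
Proof.
rewrite {1}(coefE hE e) dE_ex; last exact: supp_coef.
rewrite coef_ex //; [exact: sp_uniq|exact: sp_Rep|].
move=> b m; rewrite /Fd.
case: (boolP (coef e b m == 0)) => [/eqP->|/supp_coef //].
rewrite (der0 hdR) mulr0 !add0r => h.
have /supp_coef/andP[hb hm] : coef e b m.+1 != 0.
  by apply: contraNneq h => ->; rewrite mulr0.
by rewrite hb /= ltnW.
Qed.

Lemma down_ind (P : nat -> Prop) N : (forall k, (N <= k)%N -> P k) ->
  (forall k, P k.+1 -> P k) -> forall k, P k.
Proof.
move=> hN hS k; move Hd : (N - k)%N => d; elim: d k Hd => [|d IH] k Hd.
  by apply: hN; rewrite -subn_eq0 Hd.
apply: hS; apply: IH; by rewrite subnS Hd.
Qed.

Lemma natK0 (n : nat) (x : R) : (0 < n)%N -> n%:R * x = 0 -> x = 0.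
Proof.
move=> hn h.
have hK : (n%:R : K) != 0 by rewrite (pcharf0P _).1 // -lt0n.
have -> : x = (n%:R : K)^-1 *: (n%:R *: x) by rewrite scalerA mulVf // scale1r.
have h2 : x *+ n = 0 by rewrite -mulr_natl.
by rewrite scaler_nat h2 scaler0.
Qed.

Lemma coef_notRep e a k : ~~ Rep a -> coef e a k = 0.
Proof.
move=> ha; apply/eqP; apply: contraNT ha => /supp_coef /andP[h _].
exact: (allP (sp_Rep hE e)).
Qed.

Lemma const_E e : dE e = 0 -> exists c : K, e = j c%:A.
Proof.
move=> he.
have eq a k : Fd (coef e) a k = 0 by rewrite -coef_dE he (coef0 hE).
set f := coef e.
have fN k a : (Np hE e <= k)%N -> f a k = 0.
  move=> hk; apply/eqP; apply: contraLR hk => /supp_coef /andP[_]; by rewrite -ltnNge.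
have ha a : a != 0 -> forall k, f a k = 0.
  move=> a0; case: (boolP (Rep a)) => ra; last by move=> k; apply: coef_notRep.
  apply: (@down_ind _ (Np hE e)); first by move=> k hk; apply: fN.
  move=> k h; apply: (no_exp ra a0).
  by have := eq a k; rewrite /Fd -/f h mulr0 addr0 mulr_algl.
have h0 : forall k, f 0 k.+1 = 0.
  apply: (@down_ind _ (Np hE e)); first by move=> k hk; apply: fN; apply: leqW.
  move=> k h.
  have d1 : dR (f 0 k.+1) = 0.
    by have := eq 0 k.+1; rewrite /Fd -/f h mulr0 addr0 scale0r mul0r addr0.
  have d0 : dR (f 0 k) = - (k.+1%:R * f 0 k.+1).
    by apply/eqP; rewrite -subr_eq0 opprK; have := eq 0 k; rewrite /Fd -/f scale0r mul0r addr0 => ->.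
  have : dR (dR (f 0 k)) = 0 by rewrite d0 (derN hdR) dR_nat d1 mulr0 oppr0.
  move/no_log => [c hc].
  have : dR (f 0 k) = 0 by rewrite hc hdRK.
  rewrite d0 => /eqP; rewrite oppr_eq0 => /eqP; exact: natK0.
have d00 : dR (f 0 0%N) = 0.
  by have := eq 0 0%N; rewrite /Fd -/f h0 mulr0 addr0 scale0r mul0r addr0.
have [c hc] : exists c : K, f 0 0%N = c%:A by apply/no_log; rewrite d00 (der0 hdR).
exists c; apply: (@coef_inj _ _ _ _ _ _ _ _ _ _ hE) => a k.
have -> : j c%:A = j c%:A * tp 0 * l ^+ 0 by rewrite tp0 expr0 !mulr1.
rewrite coef_mono ?Rep0 //.
case: (eqVneq a 0) => [->|a0] /=; last by apply: ha.
case: k => [|k] /=; first exact: hc.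
exact: h0.
Qed.

End Const.

Section MatDer.
Variables (E : comPzRingType) (d : E -> E) (hd : derivation d).
Lemma der_mulmx m n p (A : 'M[E]_(m, n)) (B : 'M[E]_(n, p)) :
  map_mx d (A *m B) = map_mx d A *m B + A *m map_mx d B.
Proof.
apply/matrixP => i k; rewrite !mxE (der_sum hd) -big_split /=.
by apply: eq_bigr => c _; rewrite !mxE (der_mul hd).
Qed.
Lemma der_addmx m n (A B : 'M[E]_(m, n)) : map_mx d (A + B) = map_mx d A + map_mx d B.
Proof. by apply/matrixP => i k; rewrite !mxE (der_add hd). Qed.
Lemma der_scalmx n (c : E) : d c = 0 -> map_mx d (c%:M : 'M_n) = 0.
Proof. by move=> hc; apply/matrixP => i k; rewrite !mxE; case: (i == k); rewrite /= ?mulr1n ?mulr0n ?hc ?(der0 hd). Qed.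
End MatDer.

Section MatCoef.
Variables (K : fieldType) (charK0 : [pchar K] =i pred0) (Rep : pred K) (hRep : reps_KmodZ Rep)
  (R : comAlgType K) (tR : R) (dR : R -> R) (hdR : derivation dR)
  (hdRK : forall c : K, dR c%:A = 0)
  (E : comNzRingType) (j : {rmorphism R -> E}) (tp : K -> E) (l : E) (dE : E -> E)
  (hE : E_model Rep tR dR j tp l dE).

Local Notation coef := (coef hE).

Definition mc m n (X : 'M[E]_(m, n)) a k : 'M[R]_(m, n) := map_mx (fun e => coef e a k) X.
Definition mex m n s N (Y : K -> nat -> 'M[R]_(m, n)) : 'M[E]_(m, n) :=
  \matrix_(i, c) ex j tp l s N (fun a k => Y a k i c).
Definition kap (c : K) : E := j c%:A.

Lemma mcD m n (X Y : 'M[E]_(m, n)) a k : mc (X + Y) a k = mc X a k + mc Y a k.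
Proof. by apply/matrixP => i c; rewrite !mxE coefD. Qed.
Lemma mcN m n (X : 'M[E]_(m, n)) a k : mc (- X) a k = - mc X a k.
Proof. by apply/matrixP => i c; rewrite !mxE coefN. Qed.
Lemma mc0 m n a k : mc (0 : 'M[E]_(m, n)) a k = 0.
Proof. by apply/matrixP => i c; rewrite !mxE coef0. Qed.

Lemma mc_jmul m n p (A : 'M[R]_(m, n)) (X : 'M[E]_(n, p)) a k :
  mc (map_mx j A *m X) a k = A *m mc X a k.
Proof.
apply/matrixP => i c; rewrite !mxE coef_sum; apply: eq_bigr => b _.
by rewrite !mxE coef_jmul.
Qed.

Lemma mc_mulK m n p (X : 'M[E]_(m, n)) (C : 'M[K]_(n, p)) a k :
  mc (X *m map_mx kap C) a k = mc X a k *m map_mx (in_alg R) C.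
Proof.
apply/matrixP => i c; rewrite !mxE coef_sum; apply: eq_bigr => b _.
by rewrite !mxE /kap coef_mulj.
Qed.

Lemma mc_dE m n (X : 'M[E]_(m, n)) a k :
  mc (map_mx dE X) a k = map_mx dR (mc X a k) + a%:A *: mc X a k + k.+1%:R *: mc X a k.+1.
Proof. by apply/matrixP => i c; rewrite !mxE coef_dE. Qed.

Lemma mc_inj m n (X Y : 'M[E]_(m, n)) : (forall a k, mc X a k = mc Y a k) -> X = Y.
Proof.
move=> h; apply/matrixP => i c; apply: (@coef_inj _ _ _ _ _ _ _ _ _ _ hE) => a k.
by have := congr1 (fun M : 'M[R]_(m, n) => M i c) (h a k); rewrite !mxE.
Qed.

Definition msupp m n (s : seq K) N (Y : K -> nat -> 'M[R]_(m, n)) :=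
  forall a k, Y a k != 0 -> (a \in s) && (k < N)%N.

Lemma mc_mex m n s N (Y : K -> nat -> 'M[R]_(m, n)) : uniq s -> all Rep s -> msupp s N Y ->
  forall a k, mc (mex s N Y) a k = Y a k.
Proof.
move=> us rs sY a k; apply/matrixP => i c; rewrite !mxE coef_ex //.
move=> b h hne; apply: sY; apply: contraNneq hne => ->; by rewrite mxE.
Qed.

Lemma mc_supp m n (X : 'M[E]_(m, n)) : exists s N, [/\ uniq s, all Rep s & msupp s N (mc X)].
Proof.
have [s [N [us rs hs]]] := common_supp hE [seq X x.1 x.2 | x : 'I_m * 'I_n].
exists s, N; split => // a k hne.
case: (boolP [exists i, exists c, coef (X i c) a k != 0]) => [/existsP[i /existsP[c hic]]|hn].
  have : X i c \in [seq X x.1 x.2 | x : 'I_m * 'I_n].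
    by apply/mapP; exists (i, c); rewrite ?mem_enum.
  by move/hs => h; apply: h.
exfalso; move/negP: hne; apply; apply/eqP/matrixP => i c; rewrite !mxE.
by move/existsPn: hn => /(_ i)/existsPn/(_ c)/negPn/eqP.
Qed.

Lemma der_kap c : dE (kap c) = 0.
Proof. by rewrite /kap (dEj hE) hdRK rmorph0. Qed.

Lemma map_kap_der m n (C : 'M[K]_(m, n)) : map_mx dE (map_mx kap C) = 0.
Proof. by apply/matrixP => i k; rewrite !mxE der_kap. Qed.

End MatCoef.

Fixpoint Mrec (K : fieldType) n (M0 De : 'M[K]_n) (k : nat) : 'M[K]_n :=
  match k with 0 => M0 | k'.+1 => (k'.+1%:R)^-1 *: (Mrec M0 De k' *m De) end.

Section G2.
Variables (K : fieldType) (charK0 : [pchar K] =i pred0) (Rep : pred K) (hRep : reps_KmodZ Rep)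
  (R : comAlgType K) (tR : R) (dR : R -> R) (hdR : derivation dR)
  (hdRK : forall c : K, dR c%:A = 0)
  (no_log : forall f : R, dR (dR f) = 0 <-> exists c : K, f = c%:A)
  (no_exp : forall (a : K) (f : R), Rep a -> a != 0 -> dR f + a *: f = 0 -> f = 0)
  (E : comNzRingType) (j : {rmorphism R -> E}) (tp : K -> E) (l : E) (dE : E -> E)
  (hE : E_model Rep tR dR j tp l dE).

Local Notation coef := (coef hE).
Local Notation mc := (mc hE).
Local Notation kap := (kap j).
Local Notation mex := (mex j tp l).

Lemma kapM a b : kap (a * b) = kap a * kap b.
Proof. by rewrite /kap -rmorphM -scalerAl mul1r scalerA. Qed.
Lemma kap1 : kap 1 = 1. Proof. by rewrite /kap scale1r rmorph1. Qed.
Lemma kapB a b : kap (a - b) = kap a - kap b.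
Proof. by rewrite /kap scalerBl rmorphB. Qed.
Lemma kap_nat n : kap n%:R = n%:R.
Proof. by rewrite /kap -in_algE rmorph_nat rmorph_nat. Qed.

Lemma kap_inj a b : kap a = kap b -> a = b.
Proof.
move=> h; apply/eqP; rewrite -subr_eq0; apply/negPn/negP => hne.
have : kap (a - b) * kap (a - b)^-1 = 1 by rewrite -kapM mulfV // kap1.
by rewrite kapB h subrr mul0r => /eqP; rewrite eq_sym oner_eq0.
Qed.

Lemma size_eq m n (P : 'M[E]_(n, m)) (Q : 'M[E]_(m, n)) :
  P *m Q = 1%:M -> Q *m P = 1%:M -> m = n.
Proof.
move=> PQ QP; have := mxtrace_mulC P Q; rewrite PQ QP !mxtrace1 -!kap_nat => /kap_inj h.
have c0 := (pcharf0P K).1 charK0.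
case: (ltngtP m n) => // hmn; exfalso.
- have : ((n - m)%N%:R : K) == 0 by rewrite natrB 1?ltnW // h subrr.
  by rewrite c0 subn_eq0 leqNgt hmn.
- have : ((m - n)%N%:R : K) == 0 by rewrite natrB 1?ltnW // h subrr.
  by rewrite c0 subn_eq0 leqNgt hmn.
Qed.

Lemma mat_const m n (X : 'M[E]_(m, n)) : map_mx dE X = 0 -> exists C : 'M[K]_(m, n), X = map_mx kap C.
Proof.
move=> h.
have h' i c : exists x : K, X i c == kap x.
  have := congr1 (fun M : 'M[E]_(m, n) => M i c) h; rewrite !mxE => /(const_E charK0 hRep hdR hdRK no_log no_exp hE).
  by move=> [x ->]; exists x.
exists (\matrix_(i, c) xchoose (h' i c)); apply/matrixP => i c; rewrite !mxE.
exact/eqP/(xchooseP (h' i c)).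
Qed.

Lemma mapmx_dR_scal m n (c : K) (M : 'M[R]_(m, n)) : map_mx dR (c%:A *: M) = c%:A *: map_mx dR M.
Proof. by apply/matrixP => i k; rewrite !mxE dR_scal. Qed.
Lemma mapmx_dR_nat m n (c : nat) (M : 'M[R]_(m, n)) : map_mx dR (c%:R *: M) = c%:R *: map_mx dR M.
Proof. by apply/matrixP => i k; rewrite !mxE (der_mul hdR) (der_nat hdR) mul0r add0r. Qed.

Lemma algM (x y : K) : (x * y)%:A = x%:A * y%:A :> R.
Proof. by rewrite -scalerAl mul1r scalerA. Qed.

Lemma der_summx m n (r : seq K) (F : K -> 'M[R]_(m, n)) :
  map_mx dR (\sum_(c <- r) F c) = \sum_(c <- r) map_mx dR (F c).
Proof.
elim: r => [|c r IH]; first by rewrite !big_nil; apply/matrixP => i k; rewrite !mxE (der0 hdR).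
by rewrite !big_cons (der_addmx hdR) IH.
Qed.

Lemma natA (k : nat) : (k%:R : R) = (k%:R : K)%:A.
Proof. by rewrite -in_algE rmorph_nat. Qed.

Lemma invnat_scale p q (k : nat) (M : 'M[R]_(p, q)) : M = ((k.+1%:R : K)^-1)%:A *: (k.+1%:R *: M).
Proof.
have hk : (k.+1%:R : K) != 0 by rewrite (pcharf0P _).1.
by rewrite natA scalerA -algM mulVf // !scale1r.
Qed.

Theorem G2 n (G : 'M[R]_n) : trivial_free dE (map_mx j G) ->
  exists (U V : 'M[R]_n) (C : 'M[K]_n),
    [/\ U *m V = 1%:M, V *m U = 1%:M & map_mx dR U + G *m U = U *m map_mx (in_alg R) C].
Proof.
case=> m [P [Q [PQ QP hP]]].
have mn := size_eq PQ QP; subst m.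
have hdE := hdE hE.
have dP : map_mx dE P = - (map_mx j G *m P) by apply/eqP; rewrite -subr_eq0 opprK hP.
have dQ : map_mx dE Q = Q *m map_mx j G.
  have h1 : map_mx dE (Q *m P) = 0 by rewrite QP der_scalmx // (der1 hdE).
  move: h1; rewrite (der_mulmx hdE) dP mulmxN mulmxA => /eqP; rewrite addr_eq0 opprK => /eqP h2.
  by rewrite -[LHS]mulmx1 -PQ mulmxA h2 -!mulmxA PQ mulmx1.
have horP X : map_mx dE X + map_mx j G *m X = 0 -> exists C, X = P *m map_mx kap C.
  move=> hX.
  have : map_mx dE (Q *m X) = 0.
    rewrite (der_mulmx hdE) dQ.
    have -> : map_mx dE X = - (map_mx j G *m X) by apply/eqP; rewrite -subr_eq0 opprK hX.
    by rewrite mulmxN mulmxA subrr.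
  move/mat_const => [C hC]; exists C.
  by rewrite -hC mulmxA PQ mul1mx.
have hor_mc (X : 'M[E]_n) a k : mc (map_mx dE X + map_mx j G *m X) a k =
   map_mx dR (mc X a k) + a%:A *: mc X a k + k.+1%:R *: mc X a k.+1 + G *m mc X a k.
  by rewrite (mcD hE) (mc_dE hdR hE) (mc_jmul hE).
have [s [N [us rs sW]]] := mc_supp hE P.
have relW a k : map_mx dR ((mc P) a k) + a%:A *: (mc P) a k + k.+1%:R *: (mc P) a k.+1 + G *m (mc P) a k = 0.
  by rewrite -hor_mc hP (mc0 hE).
have W0 a k : ~~ ((a \in s) && (k < N)%N) -> (mc P) a k = 0.
  by move=> h; apply/eqP; apply: contraNT h; apply: sW.
pose Yt a k := a%:A *: (mc P) a k.
have sYt : msupp s N Yt.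
  by move=> a k h; apply: sW; apply: contraNneq h => h0; rewrite /Yt h0 scaler0.
have [Th hTh] : exists Th, mex s N Yt = P *m map_mx kap Th.
  apply: horP; apply: (@mc_inj _ _ _ _ _ _ _ _ _ _ hE) => a k; rewrite hor_mc !(mc_mex hE) // (mc0 hE).
  rewrite /Yt mapmx_dR_scal -(scaler0 _ (a%:A)) -(relW a k) !scalerDr.
  by congr (_ + _ + _ + _); rewrite ?scalemxAr // !scalerA mulrC.
have tTh a k : a%:A *: (mc P) a k = (mc P) a k *m map_mx (in_alg R) Th.
  have h := congr1 (fun X => mc X a k) hTh; rewrite /= (mc_mex hE) // (mc_mulK hE) in h; exact: h.
pose Yd a k := k.+1%:R *: (mc P) a k.+1.
have sYd : msupp s N Yd.
  move=> a k h; have /sW/andP[ha hk] : (mc P) a k.+1 != 0.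
    by apply: contraNneq h => h0; rewrite /Yd h0 scaler0.
  by rewrite ha ltnW.
have [De hDe] : exists De, mex s N Yd = P *m map_mx kap De.
  apply: horP; apply: (@mc_inj _ _ _ _ _ _ _ _ _ _ hE) => a k; rewrite hor_mc !(mc_mex hE) // (mc0 hE).
  rewrite /Yd mapmx_dR_nat -(scaler0 _ (k.+1%:R)) -(relW a k.+1) !scalerDr.
  by congr (_ + _ + _ + _); rewrite ?scalemxAr // !scalerA mulrC.
have tDe a k : k.+1%:R *: (mc P) a k.+1 = (mc P) a k *m map_mx (in_alg R) De.
  have h := congr1 (fun X => mc X a k) hDe; rewrite /= (mc_mex hE) // (mc_mulK hE) in h; exact: h.
(* Lagrange *)
pose fac a b : 'M[K]_n := (a - b)^-1 *: (Th - b%:M).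
have Wfac a b c k : (mc P) c k *m map_mx (in_alg R) (fac a b) = ((a - b)^-1 * (c - b))%:A *: (mc P) c k.
  rewrite /fac /= map_mxZ /= -scalemxAr map_mxB mulmxBr -tTh map_scalar_mx /= mul_mx_scalar.
  by rewrite -scalerBl scalerA -!in_algE -rmorphB -rmorphM.
have Wprod a c k (r : seq K) : (mc P) c k *m map_mx (in_alg R) (\prod_(b <- r | b != a) fac a b) =
    (\prod_(b <- r | b != a) ((a - b)^-1 * (c - b)))%:A *: (mc P) c k.
  elim: r => [|b r IH].
    by rewrite !big_nil map_mx1 mulmx1 scale1r scale1r.
  rewrite !big_cons; case: ifP => // hb.
  by rewrite -mulmxE map_mxM /= mulmxA Wfac -scalemxAl IH scalerA -algM.
pose pia a := \prod_(b <- s | b != a) fac a b.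
have Wpia a c k : c \in s -> (mc P) c k *m map_mx (in_alg R) (pia a) = if c == a then (mc P) c k else 0.
  move=> cs; rewrite Wprod; case: eqP => [->|/eqP ca].
    rewrite big1 ?scale1r // => b hb; rewrite mulVf //; by rewrite subr_eq0 eq_sym.
  suff -> : \prod_(b <- s | b != a) ((a - b)^-1 * (c - b)) = 0 by rewrite !scale0r.
  elim: s cs {us rs sW W0 sYt sYd hTh hDe tTh tDe pia} => [//|b r IH].
  rewrite inE big_cons => /orP[/eqP <-|hc]; first by rewrite ca subrr mulr0 mul0r.
  by case: ifP; rewrite IH // mulr0.
pose U := \sum_(c <- s) (mc P) c 0%N.
have hUa a : a \in s -> U *m map_mx (in_alg R) (pia a) = (mc P) a 0%N.
  move=> ha; rewrite /U mulmx_suml big_seq (eq_bigr (fun c => if c == a then (mc P) c 0%N else 0)).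
    rewrite -big_seq (bigD1_seq a) //= eqxx big1 ?addr0 // => c hc; by rewrite (negbTE hc).
  by move=> c hc; rewrite Wpia.
pose Mk a k := Mrec (pia a) De k.
have hWM a k : a \in s -> mc P a k = U *m map_mx (in_alg R) (Mk a k).
  move=> ha; elim: k => [|k IH]; first by rewrite hUa.
  rewrite (invnat_scale k (mc P a k.+1)) tDe IH /Mk /= map_mxZ map_mxM /=.
  by rewrite -scalemxAr mulmxA.
pose Phi := mex s N (fun a k => if (a \in s) && (k < N)%N then map_mx (in_alg R) (Mk a k) else 0).
have hPfac : P = map_mx j U *m Phi.
  apply: (@mc_inj _ _ _ _ _ _ _ _ _ _ hE) => a k; rewrite (mc_jmul hE) (mc_mex hE) //.
    case: ifP => [/andP[ha _]|h]; first exact: hWM.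
    by rewrite W0 ?h // mulmx0.
  by move=> b m; case: ifP => //; rewrite eqxx.
have [x hx] : exists x, \det U * x = 1.
  have : map_mx j U *m (Phi *m Q) = 1%:M by rewrite mulmxA -hPfac PQ.
  move/(congr1 determinant); rewrite det_mulmx det1 det_map_mx /= => h.
  exists (coef (\det (Phi *m Q)) 0 0%N).
  have := congr1 (fun e => coef e 0 0%N) h; rewrite /= coef_jmul => ->.
  by rewrite (@coef_one _ _ _ _ _ _ _ _ _ _ hE 0 0%N (tp0 hE) (Rep0 hRep)) eqxx.
exists U, (x *: \adj U), (- (Th + De)); split.
- by rewrite -scalemxAr mul_mx_adj scale_scalar_mx mulrC hx.
- by rewrite -scalemxAl mul_adj_mx scale_scalar_mx mulrC hx.
rewrite der_summx mulmx_sumr -big_split /= map_mxN map_mxD /= mulmxN mulmxDr !mulmx_suml.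
rewrite -big_split /= -sumrN; apply: eq_bigr => c _.
have := relW c 0%N; rewrite tTh tDe.
set X := map_mx dR _; set A := _ *m map_mx _ Th; set B := _ *m map_mx _ De; set Y := G *m _.
move=> h; apply: (addIr (A + B)); rewrite addNr -h addrA.
by rewrite (addrAC X Y A) (addrAC _ Y B).
Qed.
End G2.

Section Nice.
Variables (K : fieldType) (charK0 : [pchar K] =i pred0) (Rep : pred K)
  (R : comAlgType K) (tR : R) (dR : R -> R) (hdR : derivation dR)
  (hdRK : forall c : K, dR c%:A = 0)
  (E : comNzRingType) (j : {rmorphism R -> E}) (tp : K -> E) (l : E) (dE : E -> E)
  (hE : E_model Rep tR dR j tp l dE).

Local Notation kap := (kap j).
Definition mono (x : K * K * nat) : E := kap x.1.1 * tp x.1.2 * l ^+ x.2.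
Definition nice (e : E) := exists s : seq (K * K * nat), e = \sum_(x <- s) mono x.

Lemma nice0 : nice 0. Proof. by exists [::]; rewrite big_nil. Qed.
Lemma niceD e1 e2 : nice e1 -> nice e2 -> nice (e1 + e2).
Proof. by move=> [s1 ->] [s2 ->]; exists (s1 ++ s2); rewrite big_cat. Qed.
Lemma nice_mono x : nice (mono x).
Proof. by exists [:: x]; rewrite big_seq1. Qed.
Lemma nice_kapM c e : nice e -> nice (kap c * e).
Proof.
move=> [s ->]; exists [seq (c * x.1.1, x.1.2, x.2) | x <- s].
rewrite big_map mulr_sumr; apply: eq_bigr => x _.
by rewrite /mono /= (kapM j) !mulrA.
Qed.
Lemma niceN e : nice e -> nice (- e).
Proof.
move=> h; have -> : - e = kap (-1) * e by rewrite /kap scaleN1r rmorphN rmorph1 mulN1r.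
exact: nice_kapM.
Qed.
Lemma niceB e1 e2 : nice e1 -> nice e2 -> nice (e1 - e2).
Proof. by move=> h1 h2; apply: niceD => //; apply: niceN. Qed.
Lemma nice_sum I (r : seq I) (P : pred I) (F : I -> E) :
  (forall i, P i -> nice (F i)) -> nice (\sum_(i <- r | P i) F i).
Proof.
move=> h; elim: r => [|x r IH]; first by rewrite big_nil; exact: nice0.
by rewrite big_cons; case: ifP => // hx; apply: niceD => //; apply: h.
Qed.
Lemma monoM x y : mono x * mono y = mono (x.1.1 * y.1.1, x.1.2 + y.1.2, (x.2 + y.2)%N).
Proof.
by rewrite /mono /= (kapM j) (tpD hE) exprD; ring.
Qed.
Lemma niceM e1 e2 : nice e1 -> nice e2 -> nice (e1 * e2).
Proof.
move=> [s1 ->] [s2 ->].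
exists [seq (p.1.1.1 * p.2.1.1, p.1.1.2 + p.2.1.2, (p.1.2 + p.2.2)%N) | p <- [seq (x, y) | x <- s1, y <- s2]].
rewrite big_map big_allpairs mulr_suml; apply: eq_bigr => x _.
by rewrite mulr_sumr; apply: eq_bigr => y _; rewrite monoM.
Qed.
Lemma nice_kap c : nice (kap c).
Proof.
have -> : kap c = mono (c, 0, 0%N) by rewrite /mono /= (tp0 hE) expr0 !mulr1.
exact: nice_mono.
Qed.
Lemma nice_tp b : nice (tp b).
Proof.
have -> : tp b = mono (1, b, 0%N) by rewrite /mono /= (kap1 j) expr0 mulr1 mul1r.
exact: nice_mono.
Qed.
Lemma nice1 : nice 1. Proof. by rewrite -(tp0 hE); apply: nice_tp. Qed.

Lemma dE_kapM c e : dE (kap c * e) = kap c * dE e.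
Proof. by rewrite (der_mul (hdE hE)) (der_kap hdRK hE) mul0r add0r. Qed.

Lemma kapD a b : kap (a + b) = kap a + kap b.
Proof. by rewrite /kap scalerDl rmorphD. Qed.

Lemma kap_natE n : kap n%:R = n%:R. Proof. exact: kap_nat. Qed.

Lemma dE_m b k : dE (tp b * l ^+ k) = kap b * (tp b * l ^+ k) + k%:R * (tp b * l ^+ k.-1).
Proof.
rewrite (der_mul (hdE hE)) (dEtp hE); case: k => [|k].
  by rewrite expr0 (der1 (hdE hE)) mulr0 addr0 mul0r addr0 mulrA.
rewrite (der_exp (hdE hE)) (dEl hE) mulr1 /=; rewrite /kap; ring.
Qed.

Lemma nice_tpl b k : nice (tp b * l ^+ k).
Proof. by rewrite -[tp b * _]mul1r -(kap1 j) mulrA; apply: (nice_mono (1, b, k)). Qed.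

Lemma kapN a : kap (- a) = - kap a.
Proof. by rewrite /kap scaleNr rmorphN. Qed.

Lemma dE_natM n e : dE (n%:R * e) = n%:R * dE e.
Proof. by rewrite (der_mul (hdE hE)) (der_nat (hdE hE)) mul0r add0r. Qed.

Lemma solve_m lam b k : exists x, nice x /\ dE x + kap lam * x = tp b * l ^+ k.
Proof.
case: (eqVneq (b + lam) 0) => hb.
  have hinv : kap (k.+1%:R)^-1 * k.+1%:R = 1.
    by rewrite -(kap_natE k.+1) -(kapM j) mulVf ?(kap1 j) // (pcharf0P _).1.
  have hl : kap lam = - kap b.
    by rewrite -kapN; congr kap; apply/eqP; rewrite -addr_eq0 addrC hb.
  exists (kap (k.+1%:R)^-1 * (tp b * l ^+ k.+1)); split.
    by apply: nice_kapM; apply: nice_tpl.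
  rewrite dE_kapM dE_m hl /=.
  set A := tp b * l ^+ k.+1; set B := tp b * l ^+ k.
  transitivity (kap (k.+1%:R)^-1 * k.+1%:R * B); first by ring.
  by rewrite hinv mul1r.
have hinv : kap (b + lam)^-1 * (kap b + kap lam) = 1.
  by rewrite -kapD -(kapM j) mulVf ?(kap1 j).
elim: k => [|k [x [nx hx]]].
  exists (kap (b + lam)^-1 * (tp b * l ^+ 0)); split; first by apply: nice_kapM; apply: nice_tpl.
  rewrite dE_kapM dE_m /=.
  set B := tp b * l ^+ 0.
  transitivity (kap (b + lam)^-1 * (kap b + kap lam) * B); first by ring.
  by rewrite hinv mul1r.
exists (kap (b + lam)^-1 * (tp b * l ^+ k.+1 - k.+1%:R * x)); split.
  apply: nice_kapM; apply: niceB; first exact: nice_tpl.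
  by rewrite -(kap_natE k.+1); apply: nice_kapM.
have hx' : dE x = tp b * l ^+ k - kap lam * x by rewrite -hx addrK.
rewrite dE_kapM (der_add (hdE hE)) (derN (hdE hE)) dE_m dE_natM hx' /=.
set A := tp b * l ^+ k.+1; set B := tp b * l ^+ k.
transitivity (kap (b + lam)^-1 * (kap b + kap lam) * A); first by ring.
by rewrite hinv mul1r.
Qed.

Lemma solve lam g : nice g -> exists x, nice x /\ dE x + kap lam * x = g.
Proof.
move=> [s ->]; elim: s => [|y s [x [nx hx]]].
  by exists 0; split; [exact: nice0|]; rewrite big_nil mulr0 addr0 (der0 (hdE hE)).
have [z [nz hz]] := solve_m lam y.1.2 y.2.
exists (kap y.1.1 * z + x); split.
  by apply: niceD => //; apply: nice_kapM.
rewrite big_cons -hx /mono -mulrA -hz (der_add (hdE hE)) dE_kapM; ring.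
Qed.

End Nice.

Section G1.
Variables (K : closedFieldType) (charK0 : [pchar K] =i pred0) (Rep : pred K)
  (R : comAlgType K) (tR : R) (dR : R -> R) (hdR : derivation dR)
  (hdRK : forall c : K, dR c%:A = 0)
  (E : comNzRingType) (j : {rmorphism R -> E}) (tp : K -> E) (l : E) (dE : E -> E)
  (hE : E_model Rep tR dR j tp l dE).

Local Notation kap := (kap j).
Local Notation nice := (nice j tp l).
Definition nicemx m n (M : 'M[E]_(m, n)) := forall i k, nice (M i k).

Lemma map_kapM m n p (A : 'M[K]_(m, n)) (B : 'M[K]_(n, p)) :
  map_mx kap (A *m B) = map_mx kap A *m map_mx kap B.
Proof.
apply/matrixP => i k; rewrite !mxE /kap scaler_suml rmorph_sum; apply: eq_bigr => c _.
by rewrite !mxE -(kapM j).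
Qed.
Lemma map_kap1 m : map_mx kap (1%:M : 'M_m) = 1%:M.
Proof. by apply/matrixP => i k; rewrite !mxE; case: (i == k); rewrite /= ?mulr1n ?mulr0n ?(kap1 j) // /kap scale0r rmorph0. Qed.
Lemma map_kap0 m n : map_mx kap (0 : 'M_(m, n)) = 0.
Proof. by apply/matrixP => i k; rewrite !mxE /kap scale0r rmorph0. Qed.
Lemma map_kap_scalar m c : map_mx kap (c%:M : 'M_m) = (kap c)%:M.
Proof. by apply/matrixP => i k; rewrite !mxE; case: (i == k); rewrite /= ?mulr1n ?mulr0n // /kap scale0r rmorph0. Qed.

Lemma nicemx_mul m n p (A : 'M[E]_(m, n)) (B : 'M[E]_(n, p)) : nicemx A -> nicemx B -> nicemx (A *m B).
Proof. by move=> hA hB i k; rewrite mxE; apply: nice_sum => c _; apply: (niceM hE). Qed.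
Lemma nicemx_add m n (A B : 'M[E]_(m, n)) : nicemx A -> nicemx B -> nicemx (A + B).
Proof. by move=> hA hB i k; rewrite mxE; apply: niceD. Qed.
Lemma nicemx_opp m n (A : 'M[E]_(m, n)) : nicemx A -> nicemx (- A).
Proof. by move=> hA i k; rewrite mxE; apply: niceN. Qed.
Lemma nicemx0 m n : nicemx (0 : 'M[E]_(m, n)).
Proof. by move=> i k; rewrite mxE; apply: (nice0 j tp l). Qed.
Lemma nicemx_kap m n (C : 'M[K]_(m, n)) : nicemx (map_mx kap C).
Proof. by move=> i k; rewrite mxE; apply: (nice_kap hE). Qed.
Lemma nicemx_scalar m c : nice c -> nicemx (c%:M : 'M_m).
Proof. by move=> hc i k; rewrite mxE; case: (i == k); rewrite /= ?mulr1n ?mulr0n //; apply: (nice0 j tp l). Qed.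
Lemma nicemx_block m1 m2 n1 n2 (A : 'M[E]_(m1, n1)) (B : 'M[E]_(m1, n2)) (C : 'M[E]_(m2, n1)) (D : 'M[E]_(m2, n2)) :
  nicemx A -> nicemx B -> nicemx C -> nicemx D -> nicemx (block_mx A B C D).
Proof.
move=> hA hB hC hD i k.
rewrite -(splitK i) -(splitK k); case: (split i) => i'; case: (split k) => k' /=.
- by rewrite block_mxEul.
- by rewrite block_mxEur.
- by rewrite block_mxEdl.
- by rewrite block_mxEdr.
Qed.

Lemma map_dE_scalar m c : map_mx dE (c%:M : 'M_m) = (dE c)%:M.
Proof. by apply/matrixP => i k; rewrite !mxE; case: (i == k); rewrite /= ?mulr1n ?mulr0n ?(der0 (hdE hE)). Qed.
Lemma map_dE0 m n : map_mx dE (0 : 'M_(m, n)) = 0.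
Proof. by apply/matrixP => i k; rewrite !mxE (der0 (hdE hE)). Qed.

Theorem G1 n (C : 'M[K]_n) : exists P Q : 'M[E]_n,
  [/\ P *m Q = 1%:M, Q *m P = 1%:M, map_mx dE P + map_mx kap C *m P = 0, nicemx P & nicemx Q].
Proof.
elim: n C => [|n IH] C.
  exists 1%:M, 1%:M; split; try by apply/matrixP => [[]].
  by move=> [].
  by move=> [].
have [lam hlam] : exists lam, root (char_poly C^T) lam.
  by apply/closed_rootP; rewrite size_char_poly.
move: hlam; rewrite -eigenvalue_root_char => /eigenvalueP [v hv v0].
set u := v^T.
have hu : C *m u = lam *: u by rewrite /u -[C in LHS]trmxK -trmx_mul hv linearZ.
have ru : \rank u = 1%N by rewrite /u mxrank_tr rank_rV v0.
set S := col_ebase u; set Ru := row_ebase u.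
have hS : S \in unitmx by apply: col_ebase_unit.
have hRu : Ru \in unitmx by apply: row_ebase_unit.
have eb := mulmx_ebase u; rewrite ru in eb.
have Spid : S *m pid_mx 1 = u *m invmx Ru by rewrite -eb mulmxK.
pose T : 'M[K]_(1 + n) := invmx S *m C *m S.
have hTp : T *m pid_mx 1 = lam *: (pid_mx 1 : 'M_(1 + n, 1)).
  by rewrite /T -!mulmxA Spid (mulmxA C) hu -scalemxAl -scalemxAr -Spid mulKmx.
move: hTp; rewrite (@pid_mx_col K n 1) -[T](@submxK _ 1 n 1 n) mul_block_col !mulmx1 !mulmx0 !addr0.
rewrite scale_col_mx scaler0 => /eq_col_mx [hul hdl].
have hT : T = block_mx (lam%:M) (ursubmx T) 0 (drsubmx T).
  by rewrite -{1}[T](@submxK _ 1 n 1 n) hul hdl scalemx1.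
set r := ursubmx T; set C' := drsubmx T.
have [P' [Q' [PQ' QP' hP' nP' nQ']]] := IH C'.
have hx c : exists y, nice y /\ dE y + kap lam * y = - (map_mx kap r *m P') 0 c.
  apply: (solve charK0 hdRK hE) => //; apply: niceN; apply: nicemx_mul => //; exact: nicemx_kap.
have [f hf] := fin_all_exists hx.
pose x : 'M[E]_(1, n) := \row_c f c.
have hxx : map_mx dE x + (kap lam)%:M *m x + map_mx kap r *m P' = 0.
  rewrite mul_scalar_mx; apply/matrixP => i c; rewrite ord1 !mxE.
  by have [_ ->] := hf c; rewrite !mxE addNr.
pose PT : 'M[E]_(1 + n) := block_mx (tp (- lam))%:M x 0 P'.
pose QT : 'M[E]_(1 + n) := block_mx (tp lam)%:M (- ((tp lam)%:M *m x *m Q')) 0 Q'.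
have tpN : tp (- lam) * tp lam = 1 by rewrite -(tpD hE) addNr (tp0 hE).
have PQT : PT *m QT = 1%:M.
  rewrite /PT /QT mulmx_block !mul0mx !mulmx0 !addr0 !add0r PQ' -scalar_mxM tpN.
  rewrite mulmxN !mulmxA -scalar_mxM tpN mul1mx addNr.
  by rewrite [RHS](@scalar_mx_block _ 1 n).
exists (map_mx kap S *m PT), (QT *m map_mx kap (invmx S)).
have PQ : map_mx kap S *m PT *m (QT *m map_mx kap (invmx S)) = 1%:M.
  by rewrite -mulmxA (mulmxA PT) PQT mul1mx -map_kapM mulmxV // map_kap1.
split => //.
- exact: mulmx1C.
- rewrite (der_mulmx (hdE hE)) (map_kap_der hdRK hE) mul0mx add0r (mulmxA (map_mx kap C)).
  have -> : map_mx kap C *m map_mx kap S = map_mx kap S *m map_mx kap T.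
    by rewrite -!map_kapM /T !mulmxA mulmxV // mul1mx.
  rewrite -mulmxA -mulmxDr.
  suff -> : map_mx dE PT + map_mx kap T *m PT = 0 by rewrite mulmx0.
  rewrite hT /PT map_block_mx map_block_mx mulmx_block add_block_mx -/r -/C'.
  rewrite map_dE_scalar map_kap_scalar map_dE0 map_kap0 !mul0mx !mulmx0 !addr0 !add0r.
  have ul : (dE (tp (- lam)))%:M + (kap lam)%:M *m (tp (- lam))%:M = 0 :> 'M[E]_1.
    rewrite mul_scalar_mx scale_scalar_mx -raddfD /= (dEtp hE) -/(kap (- lam)) -mulrDl.
    by rewrite -kapD addNr /kap scale0r rmorph0 mul0r; apply/matrixP => i k; rewrite !mxE mul0rn.
  by rewrite ul addrA hxx hP' block_mx0.
- apply: nicemx_mul; first exact: nicemx_kap.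
  rewrite /PT /QT; apply: (@nicemx_block 1 n 1 n) => //; [apply: nicemx_scalar; apply: (nice_tp j tp l)|by move=> i c; rewrite ord1 mxE; case: (hf c)|exact: nicemx0].
- apply: nicemx_mul; last exact: nicemx_kap.
  rewrite /PT /QT; apply: (@nicemx_block 1 n 1 n) => //; [apply: nicemx_scalar; apply: (nice_tp j tp l)| |exact: nicemx0].
  apply: nicemx_opp; apply: nicemx_mul => //; apply: nicemx_mul; first by apply: nicemx_scalar; apply: (nice_tp j tp l).
  by move=> i c; rewrite ord1 mxE; case: (hf c).
Qed.
End G1.

Section IntPow.
Variables (K : fieldType) (Rep : pred K) (hRep : reps_KmodZ Rep)
  (R : comAlgType K) (tR tRi : R) (htR : tR * tRi = 1) (dR : R -> R)
  (E : comNzRingType) (j : {rmorphism R -> E}) (tp : K -> E) (l : E) (dE : E -> E)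
  (hE : E_model Rep tR dR j tp l dE).

Lemma tp_nat (n : nat) : tp n%:R = j (tR ^+ n).
Proof.
elim: n => [|n IH]; first by rewrite (tp0 hE) expr0 rmorph1.
by rewrite -addn1 natrD (tpD hE) IH (tp1 hE) exprD expr1 rmorphM.
Qed.

Lemma tp_int (z : int) : tp z%:~R = j (tpow tR tRi z).
Proof.
case: z => n /=; first by rewrite -pmulrn tp_nat.
rewrite NegzE mulrNz -pmulrn.
have h1 : tp n.+1%:R * j (tRi ^+ n.+1) = 1.
  by rewrite tp_nat -rmorphM -exprMn htR expr1n rmorph1.
have h2 : tp (- n.+1%:R) * tp n.+1%:R = 1 by rewrite -(tpD hE) addNr (tp0 hE).
by rewrite -[LHS]mulr1 -h1 mulrA h2 mul1r.
Qed.

Lemma nice_coef00 (e : E) : nice j tp l e ->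
  exists s : seq (K * int), coef hE e 0 0%N = \sum_(x <- s) x.1%:A * tpow tR tRi x.2.
Proof.
move=> [s ->]; rewrite coef_sum; elim: s => [|x s [s' IH]].
  by exists [::]; rewrite !big_nil.
have [_ [hdec _]] := hRep.
have [r [z [hr hb]]] := hdec x.1.2.
have hm : mono j tp l x = j (x.1.1%:A * tpow tR tRi z) * tp r * l ^+ x.2.
  by rewrite /mono /kap hb (tpD hE) tp_int rmorphM; ring.
exists ((if (r == 0) && (x.2 == 0%N) then [:: (x.1.1, z)] else [::]) ++ s').
rewrite big_cons big_cat IH hm coef_mono // [0 == r]eq_sym [0%N == _]eq_sym.
by case: ifP => _; rewrite ?big_seq1 ?big_nil /= ?add0r.
Qed.
End IntPow.

Lemma zmod_helper1 (V : zmodType) (a b c d : V) : (a - c) + (b - a) + (d - b) = d - c.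
Proof. by rewrite [a - c + _]addrC [b - a + (a - c)]addrA subrK [b - c + _]addrC [d - b + _]addrA subrK. Qed.
Lemma zmod_helper2 (V : zmodType) (a b : V) : a + (b - a) - b = 0.
Proof. by rewrite [a + _]addrC subrK subrr. Qed.

Section Gauge.
Variables (R : comPzRingType) (d : R -> R) (hd : derivation d).

Lemma inv_der n (P Q A : 'M[R]_n) : P *m Q = 1%:M -> Q *m P = 1%:M ->
  map_mx d P + A *m P = 0 -> map_mx d Q = Q *m A.
Proof.
move=> PQ QP hP.
have dP : map_mx d P = - (A *m P) by apply/eqP; rewrite -subr_eq0 opprK hP.
have h1 : map_mx d (Q *m P) = 0 by rewrite QP der_scalmx // (der1 hd).
move: h1; rewrite (der_mulmx hd) dP mulmxN mulmxA => /eqP; rewrite addr_eq0 opprK => /eqP h2.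
by rewrite -[LHS]mulmx1 -PQ mulmxA h2 -!mulmxA PQ mulmx1.
Qed.

Lemma gauge_hor n1 n2 (H1 C1 U1 : 'M[R]_n1) (H2 C2 U2 V2 : 'M[R]_n2) (F : 'M[R]_(n2, n1)) :
  map_mx d U1 + H1 *m U1 = U1 *m C1 -> map_mx d U2 + H2 *m U2 = U2 *m C2 ->
  U2 *m V2 = 1%:M -> V2 *m U2 = 1%:M ->
  map_mx d F + H2 *m F = F *m H1 ->
  map_mx d (V2 *m F *m U1) + C2 *m (V2 *m F *m U1) = (V2 *m F *m U1) *m C1.
Proof.
move=> h1 h2 UV VU hF.
have dU1 : map_mx d U1 = U1 *m C1 - H1 *m U1 by rewrite -h1 addrK.
have dU2 : map_mx d U2 = U2 *m C2 - H2 *m U2 by rewrite -h2 addrK.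
have dF : map_mx d F = F *m H1 - H2 *m F by rewrite -hF addrK.
have dV2 : map_mx d V2 = V2 *m H2 - C2 *m V2.
  rewrite (@inv_der _ U2 V2 (H2 - U2 *m C2 *m V2)) //.
    by rewrite mulmxBr !mulmxA VU mul1mx.
  by rewrite dU2 mulmxBl -!mulmxA VU mulmx1 addrA subrK subrr.
rewrite !(der_mulmx hd) dV2 dF dU1 mulmxDl !mulmxBl !mulmxBr !mulmxBl !mulmxA.
by rewrite zmod_helper1 subrK.
Qed.
End Gauge.

Section Sandwich.
Variables (R : comPzRingType) (d : R -> R) (hd : derivation d).
Lemma sandwich_const n1 n2 (Q2 A2 : 'M[R]_n2) (P1 A1 : 'M[R]_n1) (Y : 'M[R]_(n2, n1)) :
  map_mx d Q2 = Q2 *m A2 -> map_mx d P1 + A1 *m P1 = 0 ->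
  map_mx d Y + A2 *m Y = Y *m A1 -> map_mx d (Q2 *m Y *m P1) = 0.
Proof.
move=> hQ hP hY.
have dP : map_mx d P1 = - (A1 *m P1) by apply/eqP; rewrite -subr_eq0 opprK hP.
have dY : map_mx d Y = Y *m A1 - A2 *m Y by rewrite -hY addrK.
rewrite !(der_mulmx hd) hQ dP dY mulmxDl mulmxBr mulmxBl mulmxN !mulmxA.
by rewrite zmod_helper2.
Qed.
End Sandwich.

Section Module.
Variables (R : comNzRingType) (M : lmodType R).

Lemma swap_sum n (c : 'I_n -> R) (F : 'I_n -> 'I_n -> R) (b : 'I_n -> M) :
  \sum_i c i *: \sum_k F k i *: b k = \sum_k (\sum_i F k i * c i) *: b k.
Proof.
under eq_bigr do rewrite scaler_sumr.
rewrite exchange_big; apply: eq_bigr => k _; rewrite scaler_suml; apply: eq_bigr => i _.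
by rewrite scalerA mulrC.
Qed.

Lemma basis_change n (b : 'I_n -> M) (U V : 'M[R]_n) : is_basis b ->
  U *m V = 1%:M -> V *m U = 1%:M -> is_basis (fun i => \sum_k U k i *: b k).
Proof.
move=> [hi hs] UV VU; split.
  move=> c; rewrite swap_sum => /hi h i.
  have hU : U *m (\col_m c m) = 0.
    apply/matrixP => k z; rewrite !mxE; transitivity (\sum_i U k i * c i); last exact: h k.
    by apply: eq_bigr => m _; rewrite !mxE.
  have : (\col_m c m) = 0 by rewrite -[LHS]mul1mx -VU -mulmxA hU mulmx0.
  by move/matrixP/(_ i 0); rewrite !mxE.
move=> m; have [dd ->] := hs m.
exists (fun i => (V *m \col_k dd k) i 0); rewrite swap_sum; apply: eq_bigr => k _.
congr (_ *: _); have := congr1 (fun X : 'M[R]_(n, 1) => X k 0) (mulmxA U V (\col_k dd k)).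
by rewrite UV mul1mx !mxE => ->.
Qed.

Variables (dR : R -> R) (nabla : M -> M) (hn : is_diffmod dR nabla).

Lemma nabla0 : nabla 0 = 0.
Proof. have h := hn.1 0 0; rewrite addr0 in h; by apply: (addrI (nabla 0)); rewrite addr0 -h. Qed.

Lemma nabla_sum n (F : 'I_n -> M) : nabla (\sum_i F i) = \sum_i nabla (F i).
Proof.
elim/big_ind2: _ => //; first exact: nabla0.
by move=> x1 x2 y1 y2 <- <-; rewrite hn.1.
Qed.

Lemma conn_change n (b : 'I_n -> M) (G U C : 'M[R]_n) : conn_matrix nabla b G ->
  map_mx dR U + G *m U = U *m C -> conn_matrix nabla (fun i => \sum_k U k i *: b k) C.
Proof.
move=> hG hU i; rewrite nabla_sum swap_sum.
under eq_bigr do rewrite hn.2 hG.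
rewrite big_split /= swap_sum -big_split /=; apply: eq_bigr => k _.
rewrite -scalerDl; congr (_ *: _).
have := congr1 (fun X : 'M[R]_n => X k i) hU; rewrite !mxE => <-.
by congr (_ + _); apply: eq_bigr => p _; rewrite mulrC.
Qed.
End Module.

Lemma map_mx_inj (R S : Type) (f : R -> S) m n (X Y : 'M[R]_(m, n)) :
  injective f -> map_mx f X = map_mx f Y -> X = Y.
Proof.
move=> hf h; apply/matrixP => i k; apply: hf.
by have := congr1 (fun M : 'M[S]_(m, n) => M i k) h; rewrite !mxE.
Qed.

Unset Implicit Arguments.

Theorem mainTheorem14
  (K : closedFieldType) (charK0 : [pchar K] =i pred0)
  (Rep : pred K) (hRep : reps_KmodZ Rep)
  (L : comAlgType K) (tL tLinv : L) (hL : laurent_ring tL tLinv)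
  (dL : L -> L) (hdL : is_t_ddt tL dL)
  (A : comAlgType K) (iota : {rmorphism L -> A})
  (iota_lin : forall (k : K) (x : L), iota (k *: x) = k *: iota x)
  (iota_inj : injective iota)
  (dA : A -> A) (hdA : derivation dA)
  (hdA_ext : forall x : L, dA (iota x) = iota (dL x))
  (no_log : forall f : A, dA (dA f) = 0 <-> exists c : K, f = c%:A)
  (no_exp : forall (a : K) (f : A), Rep a -> a != 0 -> dA f + a *: f = 0 -> f = 0)
  (EL : comNzRingType) (jL : {rmorphism L -> EL}) (tpL : K -> EL) (lL : EL)
  (dEL : EL -> EL) (hEL : E_model Rep tL dL jL tpL lL dEL)
  (EA : comNzRingType) (jA : {rmorphism A -> EA}) (tpA : K -> EA) (lA : EA)
  (dEA : EA -> EA) (hEA : E_model Rep (iota tL) dA jA tpA lA dEA) :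
  (forall (M : lmodType A) (nabla : M -> M),
     is_diffmod dA nabla -> finite_free M ->
     (regular_singular jA dEA nabla <->
      exists n (b : 'I_n -> M) (G : 'M[A]_n),
        [/\ is_basis b, conn_matrix nabla b G & forall i j, exists c : K, G i j = c%:A]))
  /\
  (forall n (H : 'M[L]_n), regsing_mx jL dEL H -> regsing_mx jA dEA (map_mx iota H))
  /\
  (forall n1 n2 (H1 : 'M[L]_n1) (H2 : 'M[L]_n2),
     regsing_mx jL dEL H1 -> regsing_mx jL dEL H2 ->
     forall F' : 'M[A]_(n2, n1),
       horizontal dA (map_mx iota H1) (map_mx iota H2) F' ->
       exists! F : 'M[L]_(n2, n1), horizontal dL H1 H2 F /\ map_mx iota F = F')
  /\
  (forall n (G : 'M[A]_n), regsing_mx jA dEA G ->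
     exists n' (H : 'M[L]_n') (P : 'M[A]_(n, n')) (Q : 'M[A]_(n', n)),
       [/\ regsing_mx jL dEL H, P *m Q = 1%:M, Q *m P = 1%:M
         & horizontal dA (map_mx iota H) G P]).
Proof.
have hdL1 : derivation dL by case: hdL.
have hdLK : forall c : K, dL c%:A = 0.
  by move=> c; case: hdL => _ [hk _]; rewrite hk (der1 hdL1) scaler0.
have iota_alg : forall c : K, iota c%:A = c%:A by move=> c; rewrite iota_lin rmorph1.
have hdAK : forall c : K, dA c%:A = 0 by move=> c; rewrite -iota_alg hdA_ext hdLK rmorph0.
have no_logL : forall f : L, dL (dL f) = 0 <-> exists c : K, f = c%:A.
  move=> f; split.
    move=> h; have : dA (dA (iota f)) = 0 by rewrite !hdA_ext h rmorph0.
    by move/no_log => [c hc]; exists c; apply: iota_inj; rewrite hc iota_alg.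
  by move=> [c ->]; rewrite hdLK (der0 hdL1).
have no_expL : forall (a : K) (f : L), Rep a -> a != 0 -> dL f + a *: f = 0 -> f = 0.
  move=> a f ha a0 h; apply: iota_inj; rewrite rmorph0; apply: (@no_exp a (iota f) ha a0).
  by rewrite hdA_ext -iota_lin -rmorphD h rmorph0.
have htL : tL * tLinv = 1 by case: hL.
have htA : iota tL * iota tLinv = 1 by rewrite -rmorphM htL rmorph1.
pose G2A := G2 charK0 hRep hdA hdAK no_log no_exp hEA.
pose G2L := G2 charK0 hRep hdL1 hdLK no_logL no_expL hEL.
pose G1A := G1 charK0 hdAK hEA.
pose G1L := G1 charK0 hdLK hEL.
have iotaC n m (C : 'M[K]_(n, m)) : map_mx iota (map_mx (in_alg L) C) = map_mx (in_alg A) C.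
  by apply/matrixP => i k; rewrite !mxE iota_alg.
have dAiota n m (X : 'M[L]_(n, m)) : map_mx dA (map_mx iota X) = map_mx iota (map_mx dL X).
  by apply/matrixP => i k; rewrite !mxE hdA_ext.
have dEjA n m (X : 'M[A]_(n, m)) : map_mx dEA (map_mx jA X) = map_mx jA (map_mx dA X).
  by apply/matrixP => i k; rewrite !mxE (dEj hEA).
have transA n (H U : 'M[L]_n) (C : 'M[K]_n) : map_mx dL U + H *m U = U *m map_mx (in_alg L) C ->
    map_mx dA (map_mx iota U) + map_mx iota H *m map_mx iota U = map_mx iota U *m map_mx (in_alg A) C.
  move=> h; rewrite dAiota -map_mxM -map_mxD h map_mxM iotaC //.
split.
  move=> M nabla hn _; split.
    move=> [n [b [G [hb hG hreg]]]].
    have [U [V [C [UV VU hU]]]] := G2A n G hreg.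
    exists n, (fun i => \sum_k U k i *: b k), (map_mx (in_alg A) C); split.
    - exact: (basis_change hb UV VU).
    - exact: (conn_change hn hG hU).
    - by move=> i k; exists (C i k); rewrite mxE.
  move=> [n [b [G [hb hG hc]]]].
  have hc' i k : exists c : K, G i k == c%:A by have [c ->] := hc i k; exists c.
  pose C := \matrix_(i, k) xchoose (hc' i k).
  have hC : G = map_mx (in_alg A) C.
    by apply/matrixP => i k; rewrite !mxE; apply/eqP; exact: (xchooseP (hc' i k)).
  exists n, b, G; split => //.
  have [P [Q [PQ QP hP _ _]]] := G1A n C.
  by exists n, P, Q; split => //; rewrite hC -map_mx_comp.
split.
  move=> n H hH.
  have [U [V [C [UV VU hU]]]] := G2L n H hH.
  have [P [Q [PQ QP hP _ _]]] := G1A n C.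
  have hUA := transA _ _ _ _ hU.
  have UVA : map_mx iota U *m map_mx iota V = 1%:M by rewrite -map_mxM UV map_mx1.
  exists n, (map_mx jA (map_mx iota U) *m P), (Q *m map_mx jA (map_mx iota V)).
  have PQ2 : map_mx jA (map_mx iota U) *m P *m (Q *m map_mx jA (map_mx iota V)) = 1%:M.
    by rewrite -mulmxA (mulmxA P) PQ mul1mx -map_mxM UVA map_mx1.
  split => //; first exact: mulmx1C.
  rewrite (der_mulmx (hdE hEA)) dEjA mulmxA -map_mxM addrAC -mulmxDl -map_mxD hUA.
  rewrite map_mxM -mulmxA -mulmxDr.
  have -> : map_mx jA (map_mx (in_alg A) C) = map_mx (kap jA) C.
    by apply/matrixP => i k; rewrite !mxE.
  by rewrite addrC hP mulmx0.
split.
  move=> n1 n2 H1 H2 hH1 hH2 F' hF'.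
  have [U1 [V1 [C1 [UV1 VU1 hU1]]]] := G2L n1 H1 hH1.
  have [U2 [V2 [C2 [UV2 VU2 hU2]]]] := G2L n2 H2 hH2.
  have hU1A := transA _ _ _ _ hU1; have hU2A := transA _ _ _ _ hU2.
  have UV2A : map_mx iota U2 *m map_mx iota V2 = 1%:M by rewrite -map_mxM UV2 map_mx1.
  have VU2A : map_mx iota V2 *m map_mx iota U2 = 1%:M by rewrite -map_mxM VU2 map_mx1.
  set F2 := map_mx iota V2 *m F' *m map_mx iota U1.
  have hF2 : map_mx dA F2 + map_mx (in_alg A) C2 *m F2 = F2 *m map_mx (in_alg A) C1.
    exact: (gauge_hor hdA hU1A hU2A UV2A VU2A hF').
  have [P1 [Q1 [PQ1 QP1 hP1 nP1 nQ1]]] := G1A n1 C1.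
  have [P2 [Q2 [PQ2 QP2 hP2 nP2 nQ2]]] := G1A n2 C2.
  have dQ2 := inv_der (hdE hEA) PQ2 QP2 hP2.
  have hY : map_mx dEA (map_mx jA F2) + map_mx (kap jA) C2 *m map_mx jA F2 =
            map_mx jA F2 *m map_mx (kap jA) C1.
    rewrite dEjA.
    have kC n (C : 'M[K]_n) : map_mx (kap jA) C = map_mx jA (map_mx (in_alg A) C) by apply/matrixP => i k; rewrite !mxE.
    by rewrite !kC -!map_mxM -map_mxD hF2.
  have hZ := sandwich_const (hdE hEA) dQ2 hP1 hY.
  have [Z0 hZ0] := mat_const charK0 hRep hdA hdAK no_log no_exp hEA hZ.
  have hYP : map_mx jA F2 = P2 *m map_mx (kap jA) Z0 *m Q1.
    by rewrite -hZ0 !mulmxA PQ2 mul1mx -mulmxA PQ1 mulmx1.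
  have nY : nicemx jA tpA lA (map_mx jA F2).
    by rewrite hYP; apply: (nicemx_mul hEA); [apply: (nicemx_mul hEA) => //; apply: (nicemx_kap hEA)|].
  have hF0 i k : exists x : L, iota x == F2 i k.
    have := nY i k; rewrite mxE => /(nice_coef00 hRep htA hEA) [s hs].
    exists (\sum_(x <- s) x.1%:A * tpow tL tLinv x.2); apply/eqP.
    have -> : F2 i k = coef hEA (jA (F2 i k)) 0 0%N.
      rewrite -[jA _]mulr1 (coef_jmul hEA) (coef_one hEA 0 0%N (tp0 hEA) (Rep0 hRep)) eqxx mulr1 //.
    rewrite hs rmorph_sum; apply: eq_bigr => x _; rewrite rmorphM iota_alg.
    by case: x.2 => m /=; rewrite rmorphXn.
  pose F0 := \matrix_(i, k) xchoose (hF0 i k).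
  have hF0' : map_mx iota F0 = F2.
    by apply/matrixP => i k; rewrite !mxE; apply/eqP; exact: (xchooseP (hF0 i k)).
  have hiF : map_mx iota (U2 *m F0 *m V1) = F'.
    rewrite !map_mxM hF0' /F2 !mulmxA UV2A mul1mx -mulmxA -map_mxM UV1 map_mx1 mulmx1 //.
  exists (U2 *m F0 *m V1); split.
    split => //; apply: (@map_mx_inj _ _ iota) => //.
    by rewrite map_mxD map_mxM -dAiota hiF map_mxM hiF.
  move=> F3 [_ h3]; apply: (@map_mx_inj _ _ iota) => //; by rewrite hiF h3.
move=> n G hG.
have [U [V [C [UV VU hU]]]] := G2A n G hG.
have [P [Q [PQ QP hP _ _]]] := G1L n C.
exists n, (map_mx (in_alg L) C), U, V; split => //.
  exists n, P, Q; split => //.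
  have -> : map_mx jL (map_mx (in_alg L) C) = map_mx (kap jL) C.
    by apply/matrixP => i k; rewrite !mxE.
  exact: hP.
by rewrite /horizontal iotaC.
Qed.
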